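(* For all natural numbers $a,b$: - $O_{a+b}\prec E_{a+b}$; - $E_aO_b\prec E_{a+b}$; - $O_aE_b\prec E_{a+b}$; - $O_aO_b\prec O_{a+b}\prec E_aE_b$.
   Context: For natural numbers $c$, $E_c,O_c\in\mathbb{R}[x]$ are defined by $(u+1)^c=E_c(u^2)+uO_c(u^2)$. Relation $\prec$: for $A,B\in\mathbb{R}[x]$ with only real zeros, with zeros $\xi_1\le\cdots\le\xi_a$ of $A$ and $\theta_1\le\cdots\le\theta_b$ of $B$, $A\prec B$ means one of the following: - $\deg B=\deg A+1$ and $\theta_1\le\xi_1\le\theta_2\le\cdots\le\xi_a\le\theta_{a+1}$; - $\deg A=\deg B$ and $\xi_1\le\theta_1\le\cdots\le\xi_a\le\theta_a$. By convention $A\prec0$ and $0\prec A$ for any polynomial $A$ with only real zeros. *)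

(* Defs.v *)
From HB Require Import structures.
From mathcomp Require Import all_boot all_order all_algebra.
From mathcomp Require Import reals.
Set Implicit Arguments. Unset Strict Implicit. Unset Printing Implicit Defensive.
Import Order.TTheory GRing.Theory Num.Theory.
Local Open Scope ring_scope.

Section Defs.
Variable R : realType.

(* (u+1)^c = E_c(u^2) + u O_c(u^2): E_c / O_c are the even / odd parts of
   (X+1)^c, in the sense of MathComp's even_poly / odd_poly, which satisfy
   p = even_poly p \Po 'X^2 + 'X * (odd_poly p \Po 'X^2). *)
Definition Epoly (c : nat) : {poly R} := even_poly (('X + 1) ^+ c).
Definition Opoly (c : nat) : {poly R} := odd_poly (('X + 1) ^+ c).

Definition zeros_of (p : {poly R}) (s : seq R) : Prop :=
  sorted <=%R s /\ p = lead_coef p *: \prod_(x <- s) ('X - x%:P).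

Definition real_rooted (p : {poly R}) : Prop := exists s, zeros_of p s.

(* The interlacing relation A ≺ B of the paper, with the convention that
   A ≺ 0 and 0 ≺ A for every real-rooted A. *)
Definition prec (A B : {poly R}) : Prop :=
  real_rooted A /\ real_rooted B /\
  (A = 0 \/ B = 0 \/
   exists xi theta : seq R, zeros_of A xi /\ zeros_of B theta /\
   let a := size xi in
   ((size theta = a.+1 /\
       forall i, (i < a)%N ->
         nth 0 theta i <= nth 0 xi i /\ nth 0 xi i <= nth 0 theta i.+1)
    \/
    (size theta = a /\
       (forall i, (i < a)%N -> nth 0 xi i <= nth 0 theta i) /\
       (forall i, (i.+1 < a)%N -> nth 0 theta i <= nth 0 xi i.+1)))).

End Defs.

(* Main.v *)
Require Import Defs.
From HB Require Import structures.
From mathcomp Require Import all_boot all_order all_algebra.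
From mathcomp Require Import reals trigo.
From mathcomp Require Import ring lra zify.
Import Order.TTheory GRing.Theory Num.Theory.
Set Implicit Arguments. Unset Strict Implicit. Unset Printing Implicit Defensive.
Local Open Scope ring_scope.

Section A.
Variable R : realType.

Lemma EO_rec c : Epoly R c.+1 = Epoly R c + 'X * Opoly R c /\
                 Opoly R c.+1 = Epoly R c + Opoly R c.
Proof.
rewrite /Epoly /Opoly exprSr mulrDr mulr1 even_polyD odd_polyD even_polyMX odd_polyMX.
by split; [rewrite addrC mulrC|].
Qed.

Lemma EO_0 : Epoly R 0 = 1 /\ Opoly R 0 = 0.
Proof. by rewrite /Epoly /Opoly expr0 -polyC1 even_polyC odd_polyC. Qed.

Lemma EO_at0 c : (Epoly R c).[0] = 1 /\ (Opoly R c).[0] = c%:R.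
Proof.
elim: c => [|c [IH1 IH2]]; first by rewrite !(proj1 EO_0, proj2 EO_0) hornerC horner0.
case: (EO_rec c) => -> ->; rewrite !hornerD hornerM hornerX IH1 IH2 mul0r addr0.
by rewrite -natr1 addrC.
Qed.

Lemma EO_eval c (th : R) : cos th != 0 ->
  (Epoly R c).[- tan th ^+ 2] * cos th ^+ c = cos (c%:R * th) /\
  (Opoly R c).[- tan th ^+ 2] * cos th ^+ c * tan th = sin (c%:R * th).
Proof.
move=> hc; elim: c => [|c [IH1 IH2]].
  by rewrite !(proj1 EO_0, proj2 EO_0) hornerC horner0 !mul0r cos0 sin0 !mulr1.
case: (EO_rec c) => -> ->; rewrite !hornerD hornerM hornerX.
rewrite -natr1 !(mulrDl _ _ th) mul1r cosD sinD -IH1 -IH2 [cos th ^+ c.+1]exprSr /tan.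
set e := (Epoly R c).[_]; set o := (Opoly R c).[_]; set C := cos th ^+ c.
split; field; exact: hc.
Qed.

Lemma sin_natpi j : sin (j%:R * pi) = 0 :> R.
Proof.
elim: j => [|j IH]; first by rewrite mul0r sin0.
by rewrite -natr1 mulrDl mul1r sinDpi IH oppr0.
Qed.

Definition ang (k c : nat) : R := k%:R * pi / (c.*2)%:R.
Definition rt (k c : nat) : R := - tan (ang k c) ^+ 2.

Lemma ang_alt k c : (0 < c)%N -> ang k c = k%:R / c%:R * (pi / 2).
Proof.
move=> c0; rewrite /ang -muln2 natrM; field.
by rewrite pnatr_eq0 -lt0n.
Qed.

Lemma ang_range k c : (k < c)%N -> 0 <= ang k c < pi / 2.
Proof.
move=> kc; have pi0 := pi_gt0 R; rewrite ang_alt; last by lia.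
have c0 : (0 < c%:R :> R) by rewrite ltr0n; lia.
have hp : 0 < pi / 2 :> R by apply: divr_gt0 => //; lra.
apply/andP; split.
  by apply: mulr_ge0; [apply: divr_ge0|exact: ltW].
rewrite gtr_pMl // ltr_pdivrMr // mul1r ltr_nat //.
Qed.

Lemma cos_ang k c : (k < c)%N -> 0 < cos (ang k c).
Proof.
move=> /ang_range /andP[h1 h2]; apply: cos_gt0_pihalf; apply/andP; split => //.
apply: (lt_le_trans _ h1); rewrite oppr_lt0; apply: divr_gt0; [exact: pi_gt0|lra].
Qed.

Lemma tan_ang_ge0 k c : (k < c)%N -> 0 <= tan (ang k c).
Proof.
move=> kc; have := cos_ang kc; have /andP[h1 h2] := ang_range kc.
move=> hc; rewrite /tan divr_ge0 //; last exact: ltW.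
apply: sin_ge0_pi; apply/andP; split => //; apply: (le_trans (ltW h2)).
have := pi_gt0 R; lra.
Qed.

Lemma tan_ang_lt k1 k2 c : (k1 < k2)%N -> (k2 < c)%N -> tan (ang k1 c) < tan (ang k2 c).
Proof.
move=> k12 k2c; have k1c : (k1 < c)%N by lia.
have /andP[a1 b1] := ang_range k1c; have /andP[a2 b2] := ang_range k2c.
have hp : 0 < pi / 2 :> R by apply: divr_gt0; [exact: pi_gt0|lra].
rewrite ltr_tan ?in_itv /=; first last.
- by apply/andP; split => //; lra.
- by apply/andP; split => //; lra.
rewrite !ang_alt; try lia.
have c0 : (0 < c%:R :> R) by rewrite ltr0n; lia.
by rewrite ltr_pM2r // ltr_pM2r ?invr_gt0 // ltr_nat.
Qed.

Lemma rt_lt k1 k2 c : (k1 < k2)%N -> (k2 < c)%N -> rt k2 c < rt k1 c.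
Proof.
move=> k12 k2c; have k1c : (k1 < c)%N by lia.
rewrite /rt ltrN2; have h0 := tan_ang_ge0 k1c; have h := tan_ang_lt k12 k2c.
rewrite ltr_pXn2r //; rewrite qualifE /=; lra.
Qed.


Lemma rt_inj k1 k2 c : (k1 < c)%N -> (k2 < c)%N -> rt k1 c = rt k2 c -> k1 = k2.
Proof.
move=> h1 h2 e; case: (ltngtP k1 k2) => // h.
  by have := rt_lt h h2; rewrite e ltxx.
by have := rt_lt h h1; rewrite e ltxx.
Qed.

Lemma cang k c : (0 < c)%N -> c%:R * ang k c = k%:R * pi / 2.
Proof. by move=> c0; rewrite ang_alt //; field; rewrite pnatr_eq0 -lt0n. Qed.

Lemma rootE c j : (j < c./2)%N -> root (Epoly R c) (rt j.*2.+1 c).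
Proof.
move=> jc; have kc : (j.*2.+1 < c)%N by lia.
have hc := cos_ang kc; have hc0 : cos (ang j.*2.+1 c) != 0 by rewrite gt_eqF.
have [h _] := EO_eval c hc0.
rewrite cang in h; last by lia.
move: h.
have -> : (j.*2.+1)%:R * pi / 2 = j%:R * pi + pi / 2 :> R.
  by rewrite -addn1 -muln2 natrD natrM; field.
rewrite cosDpihalf sin_natpi oppr0 => /eqP.
rewrite mulf_eq0 expf_eq0 (negbTE hc0) andbF orbF => /eqP h.
by rewrite /root /rt h.
Qed.

Lemma rootO c j : (0 < j)%N -> (j <= (c.-1)./2)%N -> root (Opoly R c) (rt j.*2 c).
Proof.
move=> j0 jc; have kc : (j.*2 < c)%N by lia.
have hc := cos_ang kc; have hc0 : cos (ang j.*2 c) != 0 by rewrite gt_eqF.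
have ht : tan (ang j.*2 c) != 0.
  rewrite gt_eqF //; apply: le_lt_trans (tan_ang_lt (_ : (0 < j.*2)%N) kc).
    by rewrite /ang mul0r mul0r tan0.
  by lia.
have [_ h] := EO_eval c hc0.
rewrite cang in h; last by lia.
move: h.
have -> : (j.*2)%:R * pi / 2 = j%:R * pi :> R.
  by rewrite -muln2 natrM; field.
rewrite sin_natpi => /eqP.
rewrite mulf_eq0 (negbTE ht) orbF mulf_eq0 expf_eq0 (negbTE hc0) andbF orbF => /eqP h.
by rewrite /root /rt h.
Qed.

Definition lE c := [seq rt j.*2.+1 c | j <- iota 0 c./2].
Definition lO c := [seq rt j.*2 c | j <- iota 1 (c.-1)./2].

Lemma factor (p : {poly R}) (rs : seq R) : p != 0 -> (size p <= (size rs).+1)%N ->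
  all (root p) rs -> uniq rs -> p = lead_coef p *: \prod_(z <- rs) ('X - z%:P).
Proof.
move=> p0 hs hr hu; apply: all_roots_prod_XsubC => //; last by rewrite uniq_rootsE.
apply/eqP; rewrite eqn_leq hs /=; apply: max_ring_poly_roots => //.
by rewrite uniq_rootsE.
Qed.

Lemma size_Xp1 c : (size (('X + 1) ^+ c : {poly R}) <= c.+1)%N.
Proof.
apply: leq_trans (size_poly_exp_leq _ _) _.
by rewrite -polyC1 size_XaddC /= mul1n.
Qed.

Lemma factorE c : Epoly R c = lead_coef (Epoly R c) *: \prod_(z <- lE c) ('X - z%:P).
Proof.
apply: factor.
- by apply/eqP => h; have := (EO_at0 c).1; rewrite h horner0 => /eqP; rewrite eq_sym oner_eq0.
- rewrite size_map size_iota; apply: leq_trans (size_even_poly _) _.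
  have := size_Xp1 c; rewrite uphalfE; lia.
- apply/allP => x /mapP [j]; rewrite mem_iota => /andP [_ hj] ->.
  by apply: rootE; lia.
- rewrite map_inj_in_uniq ?iota_uniq // => i j; rewrite !mem_iota => /andP[_ hi] /andP[_ hj].
  move/rt_inj; lia.
Qed.

Lemma factorO c : (0 < c)%N -> Opoly R c = lead_coef (Opoly R c) *: \prod_(z <- lO c) ('X - z%:P).
Proof.
move=> c0; apply: factor.
- apply/eqP => h; have := (EO_at0 c).2; rewrite h horner0 => /eqP; rewrite eq_sym pnatr_eq0.
  lia.
- rewrite size_map size_iota; apply: leq_trans (size_odd_poly _) _.
  have := size_Xp1 c; lia.
- apply/allP => x /mapP [j]; rewrite mem_iota => /andP [hj0 hj] ->.
  by apply: rootO; lia.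
- rewrite map_inj_in_uniq ?iota_uniq // => i j; rewrite !mem_iota => /andP[_ hi] /andP[_ hj].
  move/rt_inj; lia.
Qed.


Lemma thresh (n : nat) (y : R) : exists T : R, 0 < T < 1 /\
  forall c k, (0 < k)%N -> (k < c)%N -> (c <= n)%N ->
    (rt k c <= y) = (c%:R * T <= k%:R).
Proof.
have pi0 := pi_gt0 R.
have hp : 0 < pi / 2 :> R by apply: divr_gt0 => //; lra.
case: (leP 0 y) => y0.
  exists (n.+2%:R)^-1; split.
    by rewrite invr_gt0 ltr0n /= invf_lt1 ?ltr0n // ltr1n.
  move=> c k k0 kc cn.
  have -> : rt k c <= y by apply: le_trans y0; rewrite /rt oppr_le0 sqr_ge0.
  symmetry; apply/idP; apply: (@le_trans _ _ 1).
    by rewrite ler_pdivrMr ?ltr0n // mul1r ler_nat; lia.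
  by rewrite ler1n.
set w := atan (Num.sqrt (- y)).
have sq0 : 0 < Num.sqrt (- y) by rewrite sqrtr_gt0; lra.
have w0 : 0 < w by rewrite -(atan0 R); apply: lt_atan.
have w1 : w < pi / 2 by apply: atan_ltpi2.
have tw : tan w = Num.sqrt (- y) by rewrite atanK.
exists (w / (pi / 2)); split.
  apply/andP; split; first by apply: divr_gt0.
  by rewrite ltr_pdivrMr // mul1r.
move=> c k k0 kc cn.
have c0 : (0 < c%:R :> R) by rewrite ltr0n; lia.
have /andP [a0 a1] := ang_range kc.
have ta0 := tan_ang_ge0 kc.
rewrite /rt lerNl -(sqr_sqrtr (ltW (_ : 0 < - y))); last by lra.
rewrite -tw ler_pXn2r //; last by rewrite qualifE /= tw ltW.
rewrite !leNgt ltr_tan ?in_itv /=; first last.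
- by apply/andP; split => //; lra.
- by apply/andP; split => //; lra.
rewrite -!leNgt ang_alt; last by lia.
set P := pi / 2; set u := w / P; set v := k%:R / c%:R.
have -> : w = u * P by rewrite /u divfK // gt_eqF.
have -> : k%:R = c%:R * v :> R by rewrite /v mulrC divfK // gt_eqF.
by rewrite ler_pM2r // ler_pM2l.
Qed.

Lemma count_iota_mono (P : pred nat) s m : (forall i j, (i <= j)%N -> P j -> P i) ->
  [/\ (count P (iota s m) <= m)%N,
      ((0 < count P (iota s m))%N -> P (s + (count P (iota s m)).-1)%N) &
      ((count P (iota s m) < m)%N -> ~~ P (s + count P (iota s m))%N)].
Proof.
move=> Pm; elim: m => [|m IH]; first by split.
rewrite -addn1 iotaD count_cat /= addn0.
case: IH => [h1 h2 h3].
case Ps: (P (s + m)).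
  have : all P (iota s m).
    apply/allP => x; rewrite mem_iota => /andP [_ hx].
    apply: (Pm _ (s + m)) => //; lia.
  rewrite all_count => /eqP ->; rewrite size_iota /= addn1 /=.
  split => //; first by rewrite ltnn.
rewrite /= addn0; split => //; first by lia.
move=> h; case: (ltngtP (count P (iota s m)) m) => hm; first exact: h3.
  by lia.
by rewrite hm Ps.
Qed.

Definition cnt (s : seq R) (y : R) := count (fun x => x <= y) s.

Lemma cntE c y (T : R) : 0 < T < 1 ->
  (forall k, (0 < k)%N -> (k < c)%N -> (rt k c <= y) = (c%:R * T <= k%:R)) ->
  exists N, [/\ cnt (lE c) y = (c./2 - N)%N, (N <= c./2)%N,
     N%:R * 2 - 1 < c%:R * T & c%:R * T <= N%:R * 2 + 1].
Proof.
move=> /andP [T0 T1] Hth.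
set t := c%:R * T.
have t0 : 0 <= t by rewrite /t mulr_ge0 // ltW.
have tc : t <= c%:R by rewrite /t ler_piMr // ltW.
pose P := fun j : nat => (j.*2.+1)%:R < t.
have -> : cnt (lE c) y = count (predC P) (iota 0 c./2).
  rewrite /cnt /lE count_map; apply: eq_in_count => j; rewrite mem_iota => /andP [_ hj].
  by rewrite /= Hth ?leNgt //; lia.
have := count_predC P (iota 0 c./2); rewrite size_iota => hc.
have Pm : forall i j, (i <= j)%N -> P j -> P i.
  by move=> i j ij; apply: le_lt_trans; rewrite ler_nat; lia.
have [h1 h2 h3] := count_iota_mono 0 c./2 Pm.
set N := count P (iota 0 c./2) in hc h1 h2 h3 *.
exists N; split => //; first by lia.
- case: (posnP N) => [->|Np]; first by rewrite mul0r; lra.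
  have := h2 Np; rewrite /P add0n.
  have -> : ((N.-1).*2.+1)%:R = N%:R * 2 - 1 :> R.
    by rewrite -(natrM _ N 2) muln2; apply/eqP; rewrite eq_sym subr_eq natr1; apply/eqP; congr (_%:R); lia.
  by [].
- case: (ltngtP N c./2) => hN; [| by lia |].
  + by have := h3 hN; rewrite /P add0n -leNgt -(natrM _ N 2) muln2 natr1.
  + apply: (le_trans tc); rewrite -(natrM _ N 2) natr1 ler_nat; lia.
Qed.

Lemma cntO c y (T : R) : 0 < T < 1 -> (0 < c)%N ->
  (forall k, (0 < k)%N -> (k < c)%N -> (rt k c <= y) = (c%:R * T <= k%:R)) ->
  exists N, [/\ cnt (lO c) y = ((c.-1)./2 - N)%N, (N <= (c.-1)./2)%N,
     N%:R * 2 < c%:R * T & c%:R * T <= N%:R * 2 + 2].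
Proof.
move=> /andP [T0 T1] c0 Hth.
set t := c%:R * T.
have t0 : 0 < t by rewrite /t mulr_gt0 // ltr0n.
have tc : t <= c%:R by rewrite /t ler_piMr // ltW.
pose P := fun j : nat => (j.*2)%:R < t.
have -> : cnt (lO c) y = count (predC P) (iota 1 (c.-1)./2).
  rewrite /cnt /lO count_map; apply: eq_in_count => j; rewrite mem_iota => /andP [hj0 hj].
  by rewrite /= Hth ?leNgt //; lia.
have := count_predC P (iota 1 (c.-1)./2); rewrite size_iota => hc.
have Pm : forall i j, (i <= j)%N -> P j -> P i.
  by move=> i j ij; apply: le_lt_trans; rewrite ler_nat; lia.
have [h1 h2 h3] := count_iota_mono 1 (c.-1)./2 Pm.
set N := count P (iota 1 (c.-1)./2) in hc h1 h2 h3 *.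
exists N; split => //; first by lia.
- case: (posnP N) => [->|Np]; first by rewrite mul0r.
  have := h2 Np; rewrite /P.
  have -> : (1 + N.-1)%N = N by lia.
  by rewrite -(natrM _ N 2) muln2.
- case: (ltngtP N (c.-1)./2) => hN; [| by lia |].
  + have := h3 hN; rewrite /P -leNgt.
    have -> : ((1 + N)%N.*2)%:R = N%:R * 2 + 2 :> R.
      by rewrite -(natrM _ N 2) -natrD; congr (_%:R); lia.
    by [].
  + apply: (le_trans tc); rewrite -(natrM _ N 2) -natrD ler_nat; lia.
Qed.


Lemma cnt_nth_gt (s : seq R) i : sorted <=%R s -> (i < size s)%N ->
  (i < cnt s (nth 0%R s i))%N.
Proof.
elim: s i => [|x s IH] i //= hs hi.
have hm := order_path_min (@le_trans _ R) hs.
have ss := path_sorted hs.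
case: i hi => [|i] hi /=; first by rewrite lexx.
have hxi : x <= nth 0 s i by apply: (allP hm); rewrite mem_nth.
rewrite hxi /= add1n ltnS; exact: IH.
Qed.

Lemma cnt_nth_le (s : seq R) i y : sorted <=%R s -> (i < size s)%N ->
  y < nth 0 s i -> (cnt s y <= i)%N.
Proof.
elim: s i => [|x s IH] i //= hs hi hy.
have hm := order_path_min (@le_trans _ R) hs.
have ss := path_sorted hs.
case: i hi hy => [|i] hi /= hy.
  rewrite leNgt hy /= add0n.
  case: s IH hs hm ss hi => [|z s] //= IH hs hm ss _.
  move/andP: hm => [hxz _].
  by apply: (IH 0%N) => //=; apply: lt_le_trans hxz.
have := IH i ss hi hy; case: (x <= y) => /=; lia.
Qed.

Lemma prec_counts (A B : {poly R}) xi th : zeros_of A xi -> zeros_of B th ->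
  (forall y, (size th = (size xi).+1 /\ (cnt xi y <= cnt th y <= (cnt xi y).+1)%N) \/
             (size th = size xi /\ (cnt th y <= cnt xi y <= (cnt th y).+1)%N)) ->
  prec A B.
Proof.
move=> zA zB H; split; first by exists xi.
split; first by exists th.
right; right; exists xi, th; split => //; split => //.
have [sx _] := zA; have [st _] := zB.
case: (eqVneq (size th) (size xi).+1) => hs.
  left; split => // i hi; split.
    rewrite leNgt; apply/negP => h.
    have h1 := cnt_nth_gt sx hi.
    have h2 := cnt_nth_le st (_ : (i < size th)%N) h.
    case: (H (nth 0 xi i)) => [[_ /andP [h3 _]]|[h3 _]]; last by lia.
    have : (i < size th)%N by lia.
    move=> /h2; lia.
  rewrite leNgt; apply/negP => h.
  have hi1 : (i.+1 < size th)%N by lia.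
  have h1 := cnt_nth_gt st hi1.
  have h2 := cnt_nth_le sx hi h.
  case: (H (nth 0 th i.+1)) => [[_ /andP [_ h3]]|[h3 _]]; lia.
have hs' : size th = size xi.
  by case: (H 0) => [[h _]|[h _]] //; move: hs; rewrite h eqxx.
right; split => //; split.
  move=> i hi; rewrite leNgt; apply/negP => h.
  have hi' : (i < size th)%N by lia.
  have h1 := cnt_nth_gt st hi'.
  have h2 := cnt_nth_le sx hi h.
  case: (H (nth 0 th i)) => [[h3 _]|[_ /andP [h3 _]]]; lia.
move=> i hi; rewrite leNgt; apply/negP => h.
have hi' : (i < size th)%N by lia.
have h1 := cnt_nth_gt sx hi.
have h2 := cnt_nth_le st hi' h.
case: (H (nth 0 xi i.+1)) => [[h3 _]|[_ /andP [_ h3]]]; lia.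
Qed.

Lemma zeros_mul (A B : {poly R}) xa xb : zeros_of A xa -> zeros_of B xb ->
  zeros_of (A * B) (sort <=%R (xa ++ xb)).
Proof.
move=> [_ hA] [_ hB]; split; first by apply: sort_sorted; exact: le_total.
rewrite lead_coefM (perm_big (xa ++ xb)); last by rewrite perm_sort.
rewrite big_cat /= {1}hA {1}hB.
by rewrite -scalerAl -scalerAr scalerA.
Qed.

Lemma zeros_sort (A : {poly R}) s : A = lead_coef A *: \prod_(z <- s) ('X - z%:P) ->
  zeros_of A (sort <=%R s).
Proof.
move=> h; split; first by apply: sort_sorted; exact: le_total.
by rewrite (perm_big s) //; last by rewrite perm_sort.
Qed.

Lemma cnt_sort (s : seq R) y : cnt (sort <=%R s) y = cnt s y.
Proof. by rewrite /cnt; apply/permP; rewrite perm_sort. Qed.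

Lemma cnt_cat (s1 s2 : seq R) y : cnt (s1 ++ s2) y = (cnt s1 y + cnt s2 y)%N.
Proof. by rewrite /cnt count_cat. Qed.

Lemma zeros0 : zeros_of (0 : {poly R}) [::].
Proof. by split => //; rewrite lead_coef0 scale0r. Qed.

Lemma prec0l (B : {poly R}) : real_rooted B -> prec 0 B.
Proof. by move=> hB; split; [exists [::]; exact: zeros0|split => //; left]. Qed.


Lemma natlt (x y : nat) : (x%:R < y%:R + 1 :> R) -> (x <= y)%N.
Proof. by rewrite natr1 ltr_nat ltnS. Qed.

Lemma size_lE c : size (lE c) = c./2.
Proof. by rewrite size_map size_iota. Qed.
Lemma size_lO c : size (lO c) = (c.-1)./2.
Proof. by rewrite size_map size_iota. Qed.

Lemma zE c : zeros_of (Epoly R c) (sort <=%R (lE c)).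
Proof. exact: zeros_sort (factorE c). Qed.
Lemma zO c : (0 < c)%N -> zeros_of (Opoly R c) (sort <=%R (lO c)).
Proof. by move=> c0; exact: zeros_sort (factorO c0). Qed.

Lemma part1 n : prec (Opoly R n) (Epoly R n).
Proof.
case: (posnP n) => [->|n0].
  by rewrite (proj2 EO_0); apply: prec0l; exists (sort <=%R (lE 0)); exact: zE.
apply: prec_counts (zO n0) (zE n) _ => y.
have [T [HT Hth]] := thresh n y.
have [NE [e1 e2 e3 e4]] := cntE HT (fun k k0 kn => Hth n k k0 kn (leqnn n)).
have [NO [o1 o2 o3 o4]] := cntO HT n0 (fun k k0 kn => Hth n k k0 kn (leqnn n)).
rewrite !size_sort size_lE size_lO !cnt_sort e1 o1.
have i1 : (NE <= NO + 1)%N by apply: natlt; rewrite natrD; lra.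
have i2 : (NO <= NE)%N by apply: natlt; lra.
lia.
Qed.


Lemma part2 a b : prec (Epoly R a * Opoly R b) (Epoly R (a + b)).
Proof.
case: (posnP b) => [->|b0].
  by rewrite (proj2 EO_0) mulr0; apply: prec0l; exists (sort <=%R (lE (a + 0))); exact: zE.
apply: prec_counts (zeros_mul (zE a) (zO b0)) (zE (a + b)) _ => y.
have [T [HT Hth]] := thresh (a + b) y.
have [Na [a1 a2 a3 a4]] := cntE HT (fun k k0 kn => Hth a k k0 kn (leq_addr b a)).
have [Nb [b1 b2 b3 b4]] := cntO HT b0 (fun k k0 kn => Hth b k k0 kn (leq_addl a b)).
have [Nn [n1 n2 n3 n4]] := cntE HT (fun k k0 kn => Hth (a + b)%N k k0 kn (leqnn _)).
rewrite natrD mulrDl in n3 n4.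
rewrite !(size_sort, size_cat, size_lE, size_lO, cnt_sort, cnt_cat) a1 b1 n1.
have i1 : (Na + Nb <= Nn)%N by apply: natlt; rewrite natrD; lra.
have i2 : (Nn <= Na + Nb + 1)%N by apply: natlt; rewrite !natrD; lra.
lia.
Qed.

Lemma part3 a b : prec (Opoly R a * Epoly R b) (Epoly R (a + b)).
Proof.
case: (posnP a) => [->|a0].
  by rewrite (proj2 EO_0) mul0r; apply: prec0l; exists (sort <=%R (lE (0 + b))); exact: zE.
apply: prec_counts (zeros_mul (zO a0) (zE b)) (zE (a + b)) _ => y.
have [T [HT Hth]] := thresh (a + b) y.
have [Na [a1 a2 a3 a4]] := cntO HT a0 (fun k k0 kn => Hth a k k0 kn (leq_addr b a)).
have [Nb [b1 b2 b3 b4]] := cntE HT (fun k k0 kn => Hth b k k0 kn (leq_addl a b)).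
have [Nn [n1 n2 n3 n4]] := cntE HT (fun k k0 kn => Hth (a + b)%N k k0 kn (leqnn _)).
rewrite natrD mulrDl in n3 n4.
rewrite !(size_sort, size_cat, size_lE, size_lO, cnt_sort, cnt_cat) a1 b1 n1.
have i1 : (Na + Nb <= Nn)%N by apply: natlt; rewrite natrD; lra.
have i2 : (Nn <= Na + Nb + 1)%N by apply: natlt; rewrite !natrD; lra.
lia.
Qed.

Lemma realO c : real_rooted (Opoly R c).
Proof.
case: (posnP c) => [->|c0]; last by exists (sort <=%R (lO c)); exact: zO.
by rewrite (proj2 EO_0); exists [::]; exact: zeros0.
Qed.

Lemma realEE a b : real_rooted (Epoly R a * Epoly R b).
Proof. by eexists; exact: zeros_mul (zE a) (zE b). Qed.

Lemma part4 a b : prec (Opoly R a * Opoly R b) (Opoly R (a + b)).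
Proof.
case: (posnP a) => [->|a0].
  by rewrite (proj2 EO_0) mul0r; apply: prec0l; apply: realO.
case: (posnP b) => [->|b0].
  by rewrite (proj2 EO_0) mulr0; apply: prec0l; apply: realO.
have n0 : (0 < a + b)%N by lia.
apply: prec_counts (zeros_mul (zO a0) (zO b0)) (zO n0) _ => y.
have [T [HT Hth]] := thresh (a + b) y.
have [Na [a1 a2 a3 a4]] := cntO HT a0 (fun k k0 kn => Hth a k k0 kn (leq_addr b a)).
have [Nb [b1 b2 b3 b4]] := cntO HT b0 (fun k k0 kn => Hth b k k0 kn (leq_addl a b)).
have [Nn [n1 n2 n3 n4]] := cntO HT n0 (fun k k0 kn => Hth (a + b)%N k k0 kn (leqnn _)).
rewrite natrD mulrDl in n3 n4.
rewrite !(size_sort, size_cat, size_lE, size_lO, cnt_sort, cnt_cat) a1 b1 n1.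
have i1 : (Na + Nb <= Nn)%N by apply: natlt; rewrite natrD; lra.
have i2 : (Nn <= Na + Nb + 1)%N by apply: natlt; rewrite !natrD; lra.
lia.
Qed.

Lemma part5 a b : prec (Opoly R (a + b)) (Epoly R a * Epoly R b).
Proof.
case: (posnP (a + b)) => [->|n0].
  by rewrite (proj2 EO_0); apply: prec0l; apply: realEE.
apply: prec_counts (zO n0) (zeros_mul (zE a) (zE b)) _ => y.
have [T [HT Hth]] := thresh (a + b) y.
have [Na [a1 a2 a3 a4]] := cntE HT (fun k k0 kn => Hth a k k0 kn (leq_addr b a)).
have [Nb [b1 b2 b3 b4]] := cntE HT (fun k k0 kn => Hth b k k0 kn (leq_addl a b)).
have [Nn [n1 n2 n3 n4]] := cntO HT n0 (fun k k0 kn => Hth (a + b)%N k k0 kn (leqnn _)).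
rewrite natrD mulrDl in n3 n4.
rewrite !(size_sort, size_cat, size_lE, size_lO, cnt_sort, cnt_cat) a1 b1 n1.
have i1 : (Nn <= Na + Nb)%N by apply: natlt; rewrite natrD; lra.
have i2 : (Na + Nb <= Nn + 1)%N by apply: natlt; rewrite !natrD; lra.
lia.
Qed.

End A.

Theorem lemma3p1 (R : realType) (a b : nat) :
  prec (Opoly R (a + b)) (Epoly R (a + b)) /\
  prec (Epoly R a * Opoly R b) (Epoly R (a + b)) /\
  prec (Opoly R a * Epoly R b) (Epoly R (a + b)) /\
  prec (Opoly R a * Opoly R b) (Opoly R (a + b)) /\
  prec (Opoly R (a + b)) (Epoly R a * Epoly R b).
Proof.
split; first exact: part1.
split; first exact: part2.
split; first exact: part3.
split; first exact: part4.
exact: part5.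
Qed.
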